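(* Let $\tau$ be a uniformly random permutation of $\{1,\dots,n\}$ and let $S_n$ be the number of steps of the greedy walk from $1$ to $n$ in $G_n$ (as in the context), and $L_n=L_n(\tau)$, $R_n=R_n(\tau)$. Then \[ \mathbb{E}[S_n]=2H_n-2 = 2\log n+2\gamma-2+o(1), \] and \[ \operatorname{Var}(S_n)=2\Bigl(H_n-\sum_{i=1}^n\frac1{i^2}\Bigr)+2\operatorname{Cov}(L_n,R_n)=2\log n+O(1), \] where $H_n=\sum_{i=1}^n 1/i$, $\gamma$ is Euler's constant and $\log$ is the natural logarithm.
   Context: Vertices $V=\{1,\dots,n\}\subset\mathbb{Z}$. A permutation $\tau$ of $V$ gives insertion times: vertex $x$ is inserted at time $\tau(x)$. The undirected graph $G_n$ on $V$ is built as follows: start with no edges; for $t=1,\dots,n$, let $x$ be the vertex with $\tau(x)=t$; if some $y<x$ with $\tau(y)<t$ exists, add an edge between $x$ and the largest such $y$; if some $y>x$ with $\tau(y)<t$ exists, add an edge between $x$ and the smallest such $y$. The greedy walk toward target $n$ starts at $x_0=1$ and, from the current vertex $x\ne n$, moves to the neighbor $y$ of $x$ minimizing $|y-n|$, stopping at $n$; $S_n$ is its number of moves. For a permutation $\sigma$ of $\{1,\dots,n\}$, position $i$ is a left-to-right minimum if $\sigma(i)<\min\{\sigma(1),\dots,\sigma(i-1)\}$ ($i=1$ always is), and a right-to-left minimum if $\sigma(i)<\min\{\sigma(i+1),\dots,\sigma(n)\}$ ($i=n$ always is); $L_n(\sigma)$, $R_n(\sigma)$ count them. *)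

(* Defs.v *)
From HB Require Import structures.
From mathcomp Require Import all_boot all_order all_algebra all_fingroup.
From mathcomp Require Import all_classical all_reals all_analysis.
Set Implicit Arguments. Unset Strict Implicit. Unset Printing Implicit Defensive.
Import Order.TTheory GRing.Theory Num.Theory.

(* Vertex k (1 <= k <= n) of the paper is the ordinal (k-1 : 'I_n);
   a permutation s : 'S_n encodes the insertion times: vertex x is inserted
   at time (s x).+1.  Shifting vertices and times by one changes nothing. *)
Section Graph.
Variable n : nat.
Variable s : 'S_n.

Definition left_link (x y : 'I_n) : bool :=
  [&& (val y < val x)%N, (s y < s x)%N &
      [forall z : 'I_n, ((val z < val x)%N && (s z < s x)%N) ==> (val z <= val y)%N]].

Definition right_link (x y : 'I_n) : bool :=
  [&& (val x < val y)%N, (s y < s x)%N &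
      [forall z : 'I_n, ((val x < val z)%N && (s z < s x)%N) ==> (val y <= val z)%N]].

Definition adj (x y : 'I_n) : bool :=
  [|| left_link x y, right_link x y, left_link y x | right_link y x].

(* distance to the target n (vertex index n-1 here): |y - n| *)
Definition dist_target (y : 'I_n) : nat := (n.-1 - val y)%N.

(* greedy step: the neighbour of x minimizing the distance to the target
   (stays put if x has no neighbour, which never happens for n >= 2) *)
Definition greedy_next (x : 'I_n) : 'I_n :=
  match [pick y | adj x y &&
           [forall z : 'I_n, adj x z ==> (dist_target y <= dist_target z)%N]] with
  | Some y => y
  | None => x
  end.

(* number of moves of the greedy walk from x until it reaches the target;
   fuel n suffices since the walk strictly increases *)
Fixpoint greedy_steps (fuel : nat) (x : 'I_n) : nat :=
  match fuel with
  | 0 => 0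
  | f.+1 => if val x == n.-1 then 0 else (greedy_steps f (greedy_next x)).+1
  end.

Definition S_walk : nat :=
  match [pick x : 'I_n | val x == 0%N] with
  | Some x0 => greedy_steps n x0
  | None => 0
  end.

Definition L_min : nat :=
  #|[set i : 'I_n | [forall j : 'I_n, (val j < val i)%N ==> (s i < s j)%N]]|.
Definition R_min : nat :=
  #|[set i : 'I_n | [forall j : 'I_n, (val i < val j)%N ==> (s i < s j)%N]]|.
End Graph.

Local Open Scope ring_scope.

Definition Expect (R : realType) (n : nat) (X : 'S_n -> R) : R :=
  (\sum_(s : 'S_n) X s) / (n`!)%:R.
Definition Var (R : realType) (n : nat) (X : 'S_n -> R) : R :=
  Expect (fun s => (X s - Expect X) ^+ 2).
Definition Cov (R : realType) (n : nat) (X Y : 'S_n -> R) : R :=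
  Expect (fun s => (X s - Expect X) * (Y s - Expect Y)).

Definition Hn (R : realType) (n : nat) : R := \sum_(1 <= i < n.+1) (i%:R)^-1.
Definition Hn2 (R : realType) (n : nat) : R := \sum_(1 <= i < n.+1) (i%:R ^+ 2)^-1.

Definition euler_gamma (R : realType) : R :=
  limn (fun n : nat => Hn R n - ln (n%:R : R)).

(* Main.v *)
Require Import Defs.
From HB Require Import structures.
From mathcomp Require Import all_boot all_order all_algebra all_fingroup.
From mathcomp Require Import all_classical all_reals all_analysis.
From mathcomp Require Import zify ring lra.
Import Order.TTheory GRing.Theory Num.Theory numFieldNormedType.Exports.

Section Walk.
Variable n : nat.
Variable s : 'S_n.

Lemma sneq (z w : 'I_n) : z != w -> (s z : nat) != s w.
Proof. by move=> zw; apply: contra zw => /eqP/val_inj/perm_inj ->. Qed.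

Lemma valE (x : 'I_n) : val x = nat_of_ord x. Proof. by []. Qed.

Lemma greedy_nextE (x y : 'I_n) : adj s x y ->
  (forall z, adj s x z -> (z <= y)%N) -> greedy_next s x = y.
Proof.
move=> axy hmax; rewrite /greedy_next; case: pickP => [y' /andP[a /forallP f]|none].
  have h1 := hmax _ a. have := implyP (f y) axy; rewrite /dist_target -!subn1 => h2.
  apply: val_inj => /=. have := ltn_ord y; have := ltn_ord y'. move: h1 h2. rewrite !valE. lia.
have := none y; rewrite axy /=; move/negP; case; apply/forallP=> z; apply/implyP=> az.
have := hmax _ az; rewrite /dist_target -!subn1 !valE; have := ltn_ord y; have := ltn_ord z; lia.
Qed.

Lemma sneqn (a b : 'I_n) : (a : nat) <> b -> (s a : nat) <> s b.
Proof. move=> ab sab; apply: ab; have := perm_inj (val_inj sab); by move->. Qed.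

Lemma sdet (a b : 'I_n) : ((a:nat) = b -> (s a:nat) = s b) /\ ((a:nat) <> b -> (s a:nat) <> s b).
Proof. split; last exact: sneqn. by move=> h; rewrite (val_inj h). Qed.

Definition LRm (i : 'I_n) := [forall j : 'I_n, (val j < val i)%N ==> (s i < s j)%N].
Definition RLm (i : 'I_n) := [forall j : 'I_n, (val i < val j)%N ==> (s i < s j)%N].
Definition Vm (i : 'I_n) := LRm i || RLm i.

Lemma LRmP (i : 'I_n) : reflect (forall j : 'I_n, (j < i)%N -> (s i < s j)%N) (LRm i).
Proof. apply: (iffP forallP) => h j; [by move=> lt; have := implyP (h j) lt | by apply/implyP/h]. Qed.
Lemma RLmP (i : 'I_n) : reflect (forall j : 'I_n, (i < j)%N -> (s i < s j)%N) (RLm i).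
Proof. apply: (iffP forallP) => h j; [by move=> lt; have := implyP (h j) lt | by apply/implyP/h]. Qed.

Lemma next_spec (x : 'I_n) : (x < n.-1)%N -> Vm x ->
  let y := greedy_next s x in
  [/\ (x < y)%N, Vm y & forall w : 'I_n, (x < w < y)%N -> ~~ Vm w].
Proof.
move=> xlt Vx.
case: (boolP [exists z : 'I_n, (x < z)%N && (s z < s x)%N]) => [/existsP[z0 Hz0]|noz].
- case: (@arg_minnP _ z0 (fun z : 'I_n => (x < z)%N && (s z < s x)%N) (fun z : 'I_n => nat_of_ord z) Hz0)
    => y /andP[xy syx] ymin.
  have ymin' : forall j : 'I_n, (x < j)%N -> (s j < s x)%N -> (y <= j)%N.
    by move=> j a b; apply: ymin; rewrite a b.
  have LRx : LRm x.
    case/orP: Vx => // /RLmP h; have := h _ xy; lia.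
  have -> : greedy_next s x = y.
    apply: greedy_nextE.
    + rewrite /adj /right_link.
      apply/orP; right; apply/orP; left; apply/and3P; split => //.
      by apply/forallP => z; apply/implyP => /andP[a b]; apply: ymin'.
    + move=> z; rewrite /adj /left_link /right_link => /or4P[|||] /and3P[a b /forallP c]; rewrite ?valE in a b.
      * lia.
      * by have := implyP (c y); rewrite xy syx; apply.
      * case: (leqP z y) => // yz.
        have := implyP (c y); rewrite yz /=; lia.
      * lia.
  split => //.
  + apply/orP; left; apply/LRmP => j jy.
    have := elimT (LRmP x) LRx j; have := ymin' j; have := sdet j x; lia.
  + move=> w /andP[xw wy]; rewrite /Vm negb_or; apply/andP; split.
    * apply/LRmP => h; have := h _ xw; have := ymin' w; have := sdet w x; lia.
    * apply/RLmP => h; have := h _ wy; have := ymin' w; have := sdet w x; lia.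
- have noz' : forall z : 'I_n, (x < z)%N -> (s x < s z)%N.
    move=> z xz; have := sdet z x; have : ~~ ((x < z)%N && (s z < s x)%N).
      by apply: contra noz => h; apply/existsP; exists z.
    rewrite negb_and xz /= -leqNgt; lia.
  have nlt : (n.-1 < n)%N by have := ltn_ord x; lia.
  pose last := Ordinal nlt.
  have xlast : (x < last)%N by [].
  case: (@arg_minnP _ last (fun z : 'I_n => (x < z)%N) (fun z : 'I_n => nat_of_ord (s z)) xlast)
    => y xy ymin.
  have ymin' : forall j : 'I_n, (x < j)%N -> (s y <= s j)%N by [].
  have -> : greedy_next s x = y.
    apply: greedy_nextE.
    + rewrite /adj /left_link.
      apply/orP; right; apply/orP; right; apply/orP; left; apply/and3P; split => //.
        exact: noz'.
      apply/forallP => w; apply/implyP => /andP[a b].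
      case: (leqP w x) => // xw. have := ymin' w xw; have := sdet w y; lia.
    + move=> z; rewrite /adj /left_link /right_link => /or4P[|||] /and3P[a b /forallP c]; rewrite ?valE in a b.
      * lia.
      * have := noz' z a; lia.
      * case: (leqP z y) => // yz.
        have := implyP (c y); rewrite yz /=; have := ymin' z a; have := sdet z y; lia.
      * lia.
  split => //.
  + apply/orP; right; apply/RLmP => j yj.
    have := ymin' j; have := sdet j y; lia.
  + move=> w /andP[xw wy]; rewrite /Vm negb_or; apply/andP; split.
    * apply/LRmP => h; have := h _ xw; have := noz' w xw; lia.
    * apply/RLmP => h; have := h _ wy; have := ymin' w xw; have := sdet w y; lia.
Qed.

Definition cnt (x : 'I_n) := #|[set v : 'I_n | Vm v && (x < v)%N]|.

Lemma steps_cnt f : forall x, Vm x -> (cnt x < f)%N -> greedy_steps s f x = cnt x.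
Proof.
elim: f => [//|f IH] x Vx cf /=.
case: eqP => [xl|/eqP xl].
  apply/esym/eqP; rewrite cards_eq0; apply/eqP/setP => v; rewrite !inE.
  apply/negbTE; rewrite negb_and; apply/orP; right; have := ltn_ord v; rewrite -ltnS -leqNgt; rewrite ?valE in xl; lia.
have xlt : (x < n.-1)%N by have := ltn_ord x; rewrite ?valE in xl; lia.
case: (next_spec x xlt Vx) => xy Vy gap.
set y := greedy_next s x in xy Vy gap *.
have ce : cnt x = (cnt y).+1.
  rewrite /cnt; have -> : [set v : 'I_n | Vm v && (x < v)%N] = y |: [set v : 'I_n | Vm v && (y < v)%N];
    last by rewrite cardsU1 inE ltnn andbF.
  apply/setP => v; rewrite !inE.
  case: (eqVneq v y) => [->|vy]; first by rewrite Vy xy.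
  rewrite /=; case Vv: (Vm v) => //=.
  have := gap v; rewrite Vv /=; have : (v:nat) <> y by move=> h; move: vy; rewrite (val_inj h) eqxx.
  lia.
rewrite ce IH //; rewrite ce in cf; lia.
Qed.

Lemma Vcard_inter (z0 : 'I_n) : val z0 = 0%N ->
  #|[set i | LRm i] :&: [set i | RLm i]| = 1%N.
Proof.
move=> z0v'; have z0v : (z0 : nat) = 0%N := z0v'; set m := (s^-1)%g z0.
have sm : s m = z0 by rewrite /m permKV.
rewrite -(cards1 m); apply: eq_card => v; rewrite !inE.
apply/idP/idP.
- move=> /andP[/LRmP h1 /RLmP h2]; apply/eqP/val_inj/eqP; case: (ltngtP v m) => // vm.
  + have := h2 _ vm; rewrite sm; lia.
  + have := h1 _ vm; rewrite sm; lia.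
- move=> /eqP ->; apply/andP; split; [apply/LRmP|apply/RLmP] => j jm;
    have := sdet j m; rewrite sm; lia.
Qed.

Lemma walk_LR : (0 < n)%N -> (S_walk s + 2 = L_min s + R_min s)%N.
Proof.
move=> n0; rewrite /S_walk; case: pickP => [x0 /eqP x00|none]; last first.
  by have := none (Ordinal n0).
have Vx0 : Vm x0 by apply/orP; left; apply/LRmP => j; rewrite -valE x00.
have cx0 : (cnt x0 < n)%N.
  have : (cnt x0 <= #|[set~ x0]|)%N.
    apply: subset_leq_card; apply/fintype.subsetP => v; rewrite !inE; apply: contraTN => /eqP ->; rewrite ltnn andbF //.
  rewrite cardsC1 card_ord; lia.
rewrite steps_cnt //.
have eV : [set v | Vm v] = x0 |: [set v : 'I_n | Vm v && (x0 < v)%N].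
  apply/setP => v; rewrite !inE; case: (eqVneq v x0) => [->|vx]; first by rewrite Vx0.
  rewrite /=; case: (Vm v) => //=; have : (v : nat) <> x0 by move=> h; move: vx; rewrite (val_inj h) eqxx.
  rewrite -valE x00; lia.
have := cardsU1 x0 [set v : 'I_n | Vm v && (x0 < v)%N]; rewrite -eV inE ltnn andbF /= => cV.
have eU : [set v | Vm v] = [set i | LRm i] :|: [set i | RLm i].
  by apply/setP => v; rewrite !inE.
have := cardsUI [set i | LRm i] [set i | RLm i]; rewrite -eU (Vcard_inter x0 x00).
rewrite /L_min /R_min /cnt -/(LRm _) => h.
have -> : #|[set i | [forall j : 'I_n, (val j < val i)%N ==> (s i < s j)%N]]| = #|[set i | LRm i]| by [].
have -> : #|[set i | [forall j : 'I_n, (val i < val j)%N ==> (s i < s j)%N]]| = #|[set i | RLm i]| by [].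
by rewrite -h cV addn1 add1n addn2.
Qed.
End Walk.

Section Decomp.
Local Open Scope ring_scope.
Variable V : zmodType.

Lemma sum_lift_perm n (F : 'S_n.+1 -> V) i j :
  \sum_(s : 'S_n.+1 | s i == j) F s = \sum_(s : 'S_n) F (lift_perm i j s).
Proof.
rewrite (reindex (lift_perm i j)); last first.
  pose ulsf i0 (s : 'S_n.+1) k := odflt k (unlift (s i0) (s (lift i0 k))).
  have ulsfK i0 (s : 'S_n.+1) k: lift (s i0) (ulsf i0 s k) = s (lift i0 k).
    rewrite /ulsf; have:= neq_lift i0 k.
    by rewrite -(can_eq (permK s)) => /unlift_some[] ? ? ->.
  have inj_ulsf: injective (ulsf i _).
    move=> s; apply: can_inj (ulsf (s i) s^-1%g) _ => k'.
    by rewrite {1}/ulsf ulsfK !permK liftK.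
  exists (fun s => perm (inj_ulsf s)) => [s _ | s].
    by apply/permP=> k'; rewrite permE /ulsf lift_perm_lift lift_perm_id liftK.
  move/(s _ =P _) => si0; apply/permP=> k.
  case: (unliftP i k) => [k'|] ->; rewrite ?lift_perm_id //.
  by rewrite lift_perm_lift -si0 permE ulsfK.
by apply: eq_bigl => s; rewrite lift_perm_id eqxx.
Qed.

Lemma sum_perm_decomp n (F : 'S_n.+1 -> V) :
  \sum_(s : 'S_n.+1) F s = \sum_(p < n.+1) \sum_(s : 'S_n) F (lift_perm p ord_max s).
Proof.
rewrite (partition_big (fun s : 'S_n.+1 => (s^-1)%g ord_max) xpredT) //=.
apply: eq_bigr => p _; rewrite -sum_lift_perm; apply: eq_bigl => s.
apply/eqP/eqP => [<-|<-]; [exact: permKV | exact: permK].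
Qed.
End Decomp.

Arguments LRm {n}. Arguments RLm {n}.

Lemma card_sum k (P : pred 'I_k) : #|[set i | P i]| = (\sum_(i < k) (P i : nat))%N.
Proof. rewrite [RHS](eq_bigr (fun i => if P i then 1%N else 0%N)); last by move=> i _; case: (P i).
rewrite -big_mkcond /= sum1_card; apply: eq_card => i; rewrite inE. by []. Qed.

Lemma valLift k (p : 'I_k.+1) (a : 'I_k) : (lift p a : nat) = (a + (p <= a))%N.
Proof. by rewrite /= /bump addnC. Qed.

Lemma lift_lt k (p : 'I_k.+1) (a b : 'I_k) : (lift p a < lift p b)%N = (a < b)%N.
Proof. rewrite /= /bump; case: (leqP p a); case: (leqP p b) => h1 h2 /=; apply/idP/idP => h; lia. Qed.

Lemma ins_val n (s : 'S_n) (p : 'I_n.+1) (k : 'I_n) :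
  ((lift_perm p ord_max s) (lift p k) : nat) = s k.
Proof. by rewrite lift_perm_lift lift_max. Qed.

Lemma ins_valp n (s : 'S_n) (p : 'I_n.+1) :
  ((lift_perm p ord_max s) p : nat) = n.
Proof. by rewrite lift_perm_id. Qed.

Lemma LRm_ins n (s : 'S_n) (p : 'I_n.+1) (k : 'I_n) :
  LRm (lift_perm p ord_max s) (lift p k) = LRm s k.
Proof.
apply/LRmP/LRmP => h j.
- move=> jk; have := h (lift p j); rewrite lift_lt !ins_val; exact.
- case: (unliftP p j) => [j'|] -> jl.
  + rewrite !ins_val; apply: h; by move: jl; rewrite lift_lt.
  + by rewrite ins_valp ins_val.
Qed.

Lemma RLm_ins n (s : 'S_n) (p : 'I_n.+1) (k : 'I_n) :
  RLm (lift_perm p ord_max s) (lift p k) = RLm s k.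
Proof.
apply/RLmP/RLmP => h j.
- move=> jk; have := h (lift p j); rewrite lift_lt !ins_val; exact.
- case: (unliftP p j) => [j'|] -> jl.
  + rewrite !ins_val; apply: h; by move: jl; rewrite lift_lt.
  + by rewrite ins_valp ins_val.
Qed.

Lemma LRm_insp n (s : 'S_n) (p : 'I_n.+1) :
  LRm (lift_perm p ord_max s) p = (p == ord0).
Proof.
apply/LRmP/eqP => [h|->]; last by move=> j.
apply/val_inj => /=; case: (posnP p) => // p0.
by move: (h ord0 p0); rewrite ins_valp ltnNge -ltnS ltn_ord.
Qed.

Lemma RLm_insp n (s : 'S_n) (p : 'I_n.+1) :
  RLm (lift_perm p ord_max s) p = (p == ord_max).
Proof.
apply/RLmP/eqP => [h|->]; last by move=> j /=; have := ltn_ord j; lia.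
apply/val_inj => /=; case: (ltngtP p n) => // pn; last by have := ltn_ord p; lia.
by move: (h ord_max pn); rewrite ins_valp ltnNge -ltnS ltn_ord.
Qed.

Lemma L_def m (t : 'S_m) : L_min t = #|[set i | LRm t i]|. Proof. by []. Qed.
Lemma R_def m (t : 'S_m) : R_min t = #|[set i | RLm t i]|. Proof. by []. Qed.

Lemma L_ins n (s : 'S_n) (p : 'I_n.+1) :
  L_min (lift_perm p ord_max s) = (L_min s + (p == ord0))%N.
Proof.
rewrite !L_def !card_sum (bigD1_ord p) //= LRm_insp addnC; congr (_ + _)%N.
by apply: eq_bigr => k _; rewrite LRm_ins.
Qed.

Lemma R_ins n (s : 'S_n) (p : 'I_n.+1) :
  R_min (lift_perm p ord_max s) = (R_min s + (p == ord_max))%N.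
Proof.
rewrite !R_def !card_sum (bigD1_ord p) //= RLm_insp addnC; congr (_ + _)%N.
by apply: eq_bigr => k _; rewrite RLm_ins.
Qed.

Section Moments.
Local Open Scope ring_scope.
Context {R : realType}.

Definition EF n (F : nat -> nat -> R) := Expect (fun s : 'S_n => F (L_min s) (R_min s)).

Lemma fact_neq0 n : (n`!)%:R != 0 :> R.
Proof. by rewrite pnatr_eq0 -lt0n fact_gt0. Qed.

Lemma Expect_ext n (X Y : 'S_n -> R) : (forall s, X s = Y s) -> Expect X = Expect Y.
Proof. by move=> h; rewrite /Expect; congr (_ / _); apply: eq_bigr => s _; rewrite h. Qed.

Lemma ExpectD n (X Y : 'S_n -> R) : Expect (fun s => X s + Y s) = Expect X + Expect Y.
Proof. by rewrite /Expect big_split /= mulrDl. Qed.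

Lemma ExpectZ n c (X : 'S_n -> R) : Expect (fun s => c * X s) = c * Expect X.
Proof. by rewrite /Expect -mulr_sumr mulrA. Qed.

Lemma Expect_cst n c : Expect (fun s : 'S_n => c) = c :> R.
Proof.
rewrite /Expect sumr_const card_Sn -[c *+ _]mulr_natr mulfK //.
Qed.

Lemma EF_ext n F G : (forall a b, F a b = G a b) -> EF n F = EF n G.
Proof. by move=> h; apply: Expect_ext => s; rewrite h. Qed.

Lemma EF_add n F G : EF n (fun a b => F a b + G a b) = EF n F + EF n G.
Proof. exact: ExpectD. Qed.

Lemma EF_scale n c F : EF n (fun a b => c * F a b) = c * EF n F.
Proof. exact: ExpectZ. Qed.

Lemma EF_cst n c : EF n (fun _ _ => c) = c.
Proof. exact: Expect_cst. Qed.

Lemma EF_rec n F : EF n.+1 F = (n.+1%:R)^-1 *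
  \sum_(p < n.+1) EF n (fun a b => F (a + (p == ord0))%N (b + (p == ord_max))%N).
Proof.
rewrite /EF /Expect sum_perm_decomp.
under eq_bigr => p _ do under eq_bigr => s _ do rewrite L_ins R_ins.
rewrite factS natrM -mulr_suml.
have h1 := fact_neq0 n. have h2 : n.+1%:R != 0 :> R by rewrite pnatr_eq0.
by field; apply/andP.
Qed.

Lemma EF0 F : EF 0 F = F 0%N 0%N.
Proof.
rewrite -[RHS](EF_cst 0); apply: Expect_ext => s.
have e : forall (P : pred 'I_0), #|[set i | P i]| = 0%N.
  by move=> P; apply/eqP; rewrite cards_eq0; apply/eqP/setP => -[].
by rewrite /L_min /R_min !e.
Qed.

Lemma EF1 F : EF 1 F = F 1%N 1%N.
Proof. by rewrite EF_rec big_ord1 EF0 /= invr1 mul1r. Qed.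

Lemma sum_p k (G : bool -> bool -> R) :
  \sum_(p < k.+2) G (p == ord0) (p == ord_max) = G true false + G false true + k%:R * G false false.
Proof.
rewrite big_ord_recl big_ord_recr /=.
have -> : (ord0 == ord_max :> 'I_k.+2) = false by apply/eqP => /(congr1 val).
have -> : (lift ord0 (ord_max : 'I_k.+1) == ord0 :> 'I_k.+2) = false by apply/eqP => /(congr1 val).
have -> : (lift ord0 (ord_max : 'I_k.+1) == ord_max :> 'I_k.+2) by apply/eqP/val_inj.
rewrite (eq_bigr (fun _ => G false false)); last first.
  move=> i _; congr G; apply/negbTE/eqP => /(congr1 val) /=; rewrite /bump /=; have := ltn_ord i; lia.
rewrite eqxx sumr_const card_ord -mulr_natl; lra.
Qed.
End Moments.

Section Moments2.
Local Open Scope ring_scope.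
Variable R : realType.

Definition Q (c0 c1 c2 c3 c4 c5 : R) (a b : nat) : R :=
  c0 + c1 * a%:R + c2 * b%:R + c3 * a%:R ^+ 2 + c4 * b%:R ^+ 2 + c5 * (a%:R * b%:R).

Definition mL n := EF n (fun a b => (a%:R : R)).
Definition mR n := EF n (fun a b => (b%:R : R)).
Definition mLL n := EF n (fun a b => (a%:R : R) ^+ 2).
Definition mRR n := EF n (fun a b => (b%:R : R) ^+ 2).
Definition mLR n := EF n (fun a b => (a%:R : R) * b%:R).

Lemma EF_Q n c0 c1 c2 c3 c4 c5 : EF n (Q c0 c1 c2 c3 c4 c5) =
  c0 + c1 * mL n + c2 * mR n + c3 * mLL n + c4 * mRR n + c5 * mLR n.
Proof.
rewrite /Q !EF_add !EF_scale EF_cst //.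
Qed.

Lemma EF_rec2 k (F : nat -> nat -> R) : EF k.+2 F = (k.+2%:R)^-1 *
  (EF k.+1 (fun a b => F (a + 1)%N b) + EF k.+1 (fun a b => F a (b + 1)%N) + k%:R * EF k.+1 F).
Proof.
rewrite EF_rec (sum_p k (fun x y => EF k.+1 (fun a b => F (a + x)%N (b + y)%N))).
congr (_ * (_ + _ + _ * _)); apply: EF_ext => a b; by rewrite ?addn0.
Qed.

Lemma HnS k : Hn R k.+1 = Hn R k + (k.+1%:R)^-1.
Proof. by rewrite /Hn big_nat_recr. Qed.
Lemma Hn2S k : Hn2 R k.+1 = Hn2 R k + (k.+1%:R ^+ 2)^-1.
Proof. by rewrite /Hn2 big_nat_recr. Qed.
Lemma Hn1 : Hn R 1 = 1. Proof. by rewrite /Hn big_nat1 invr1. Qed.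
Lemma Hn21 : Hn2 R 1 = 1. Proof. by rewrite /Hn2 big_nat1 expr1n invr1. Qed.

Lemma EF_recQ k c0 c1 c2 c3 c4 c5 : EF k.+2 (Q c0 c1 c2 c3 c4 c5) = (k.+2%:R)^-1 *
  ((c0 + c1 + c3) + (c1 + 2 * c3) * mL k.+1 + (c2 + c5) * mR k.+1 + c3 * mLL k.+1 + c4 * mRR k.+1 + c5 * mLR k.+1
   + ((c0 + c2 + c4) + (c1 + c5) * mL k.+1 + (c2 + 2 * c4) * mR k.+1 + c3 * mLL k.+1 + c4 * mRR k.+1 + c5 * mLR k.+1)
   + k%:R * (c0 + c1 * mL k.+1 + c2 * mR k.+1 + c3 * mLL k.+1 + c4 * mRR k.+1 + c5 * mLR k.+1)).
Proof.
rewrite EF_rec2 -!EF_Q.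
congr (_ * (_ + _ + _)); apply: EF_ext => a b; rewrite /Q !natrD; ring.
Qed.

Lemma mL_Q n : mL n = EF n (Q 0 1 0 0 0 0). Proof. by apply: EF_ext => a b; rewrite /Q; ring. Qed.
Lemma mR_Q n : mR n = EF n (Q 0 0 1 0 0 0). Proof. by apply: EF_ext => a b; rewrite /Q; ring. Qed.
Lemma mLL_Q n : mLL n = EF n (Q 0 0 0 1 0 0). Proof. by apply: EF_ext => a b; rewrite /Q; ring. Qed.
Lemma mRR_Q n : mRR n = EF n (Q 0 0 0 0 1 0). Proof. by apply: EF_ext => a b; rewrite /Q; ring. Qed.
Lemma mLR_Q n : mLR n = EF n (Q 0 0 0 0 0 1). Proof. by apply: EF_ext => a b; rewrite /Q; ring. Qed.

Lemma moments k :
  [/\ mL k.+1 = Hn R k.+1, mR k.+1 = Hn R k.+1,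
      mLL k.+1 = Hn R k.+1 ^+ 2 + Hn R k.+1 - Hn2 R k.+1,
      mRR k.+1 = Hn R k.+1 ^+ 2 + Hn R k.+1 - Hn2 R k.+1 &
      mLR k.+1 = Hn R k.+1 ^+ 2 + 1 - Hn2 R k.+1].
Proof.
elim: k => [|k [IL IR ILL IRR ILR]].
  by rewrite /mL /mR /mLL /mRR /mLR !EF1 Hn1 Hn21; split; rewrite ?expr1n; lra.
have hk : k.+2%:R != 0 :> R by rewrite pnatr_eq0.
rewrite [mL _]mL_Q [mR _]mR_Q [mLL _]mLL_Q [mRR _]mRR_Q [mLR _]mLR_Q !EF_recQ IL IR ILL IRR ILR.
rewrite (HnS k.+1) (Hn2S k.+1).
by split; field.
Qed.

End Moments2.

Arguments Q {R}.

Section Final.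
Local Open Scope ring_scope.
Variable R : realType.

Lemma S_real n (s : 'S_n) : (0 < n)%N ->
  (S_walk s)%:R = (L_min s)%:R + (R_min s)%:R - 2 :> R.
Proof.
move=> n0; have := congr1 (fun m => m%:R : R) (@walk_LR n s n0) => /=.
rewrite !natrD => h; rewrite -h; ring.
Qed.

Lemma ES k : Expect (fun s : 'S_k.+1 => (S_walk s)%:R : R) = 2 * Hn R k.+1 - 2.
Proof.
rewrite (@Expect_ext _ _ _ (fun s => (Q (-2) 1 1 0 0 0 (L_min s) (R_min s)))); last first.
  by move=> s; rewrite S_real // /Q; ring.
have -> : forall G, Expect (fun s : 'S_k.+1 => G (L_min s) (R_min s)) = EF k.+1 G by [].
by rewrite EF_Q; case: (moments R k) => -> -> _ _ _; ring.
Qed.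

Lemma CovLR k : Cov (fun s : 'S_k.+1 => (L_min s)%:R : R) (fun s => (R_min s)%:R) = 1 - Hn2 R k.+1.
Proof.
case: (moments R k) => IL IR ILL IRR ILR.
have eL : Expect (fun s : 'S_k.+1 => (L_min s)%:R : R) = Hn R k.+1 by rewrite -IL.
have eR : Expect (fun s : 'S_k.+1 => (R_min s)%:R : R) = Hn R k.+1 by rewrite -IR.
rewrite /Cov eL eR.
rewrite (@Expect_ext _ _ _ (fun s => (Q (Hn R k.+1 ^+ 2) (- Hn R k.+1) (- Hn R k.+1) 0 0 1 (L_min s) (R_min s)))); last first.
  by move=> s; rewrite /Q; ring.
have -> : forall G, Expect (fun s : 'S_k.+1 => G (L_min s) (R_min s)) = EF k.+1 G by [].
rewrite EF_Q IL IR ILR; ring.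
Qed.

Lemma VarS k : Var (fun s : 'S_k.+1 => (S_walk s)%:R : R) = 2 * Hn R k.+1 - 4 * Hn2 R k.+1 + 2.
Proof.
rewrite /Var ES.
set d := 2 * Hn R k.+1.
rewrite (@Expect_ext _ _ _ (fun s => (Q (d ^+ 2) (- 2 * d) (- 2 * d) 1 1 2 (L_min s) (R_min s)))); last first.
  by move=> s; rewrite S_real // /Q; ring.
have -> : forall G, Expect (fun s : 'S_k.+1 => G (L_min s) (R_min s)) = EF k.+1 G by [].
rewrite EF_Q; case: (moments R k) => -> -> -> -> ->; rewrite /d; ring.
Qed.
End Final.

Local Open Scope ring_scope.
Local Open Scope classical_set_scope.

Section Anal.
Variable R : realType.

Lemma Hn0 : Hn R 0 = 0. Proof. by rewrite /Hn big_geq. Qed.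
Lemma HnS' k : Hn R k.+1 = Hn R k + (k.+1%:R)^-1.
Proof. by rewrite /Hn big_nat_recr. Qed.
Lemma Hn2S' k : Hn2 R k.+1 = Hn2 R k + (k.+1%:R ^+ 2)^-1.
Proof. by rewrite /Hn2 big_nat_recr. Qed.

Lemma lnS_le k : ln (k.+2%:R : R) - ln (k.+1%:R) <= (k.+1%:R)^-1.
Proof.
have p1 : (0 : R) < k.+1%:R by rewrite ltr0n.
have p2 : (0 : R) < k.+2%:R by rewrite ltr0n.
rewrite -ln_div ?posrE //.
have -> : (k.+2%:R / k.+1%:R : R) = 1 + (k.+1%:R)^-1.
  have hz : (k.+1%:R : R) != 0 by rewrite gt_eqF.
  by field.
apply: le_ln1Dx; apply: (@lt_trans _ _ 0); [by rewrite ltrN10 | by rewrite invr_gt0].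
Qed.

Lemma lnS_ge k : (k.+2%:R : R)^-1 <= ln (k.+2%:R : R) - ln (k.+1%:R).
Proof.
have p1 : (0 : R) < k.+1%:R by rewrite ltr0n.
have p2 : (0 : R) < k.+2%:R by rewrite ltr0n.
have h : ln (k.+1%:R / k.+2%:R : R) <= - (k.+2%:R)^-1.
  have -> : (k.+1%:R / k.+2%:R : R) = 1 + - (k.+2%:R)^-1.
    have hz : (k.+2%:R : R) != 0 by rewrite gt_eqF.
    by field.
  apply: le_ln1Dx; have : (k.+2%:R : R)^-1 < 1.
    by rewrite invf_lt1 // ltr1n.
  move: (k.+2%:R : R)^-1 => x; lra.
rewrite ln_div ?posrE // in h; move: h; move: (k.+2%:R : R)^-1 => x; lra.
Qed.

Lemma Hn_ge_ln k : ln (k.+1%:R : R) <= Hn R k.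
Proof.
elim: k => [|k IH]; first by rewrite Hn0 ln1.
rewrite HnS'; have := lnS_le k; move: (k.+1%:R : R)^-1 => x; lra.
Qed.

Definition u n := Hn R n - ln (n%:R : R).

Lemma u_dec k : u k.+2 <= u k.+1.
Proof. rewrite /u (HnS' k.+1); have := lnS_ge k; move: (k.+2%:R : R)^-1 => x; lra. Qed.

Lemma u_ge0 k : 0 <= u k.+1.
Proof.
rewrite /u; have := Hn_ge_ln k.+1.
have : ln (k.+1%:R : R) <= ln (k.+2%:R) by rewrite ler_ln ?posrE ?ltr0n // ler_nat.
lra.
Qed.

Lemma u_le1 k : u k.+1 <= 1.
Proof.
elim: k => [|k IH]; first by rewrite /u HnS' Hn0 ln1 subr0 add0r invr1.
have := u_dec k; lra.
Qed.
End Anal.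

Section Anal2.
Variable R : realType.

Lemma Hn2_ge1 k : 1 <= Hn2 R k.+1.
Proof.
elim: k => [|k IH]; first by rewrite Hn2S' /Hn2 big_geq // add0r expr1n invr1.
rewrite (Hn2S' R k.+1); have : (0 : R) <= (k.+2%:R ^+ 2)^-1 by rewrite invr_ge0 exprn_ge0.
move: (k.+2%:R ^+ 2 : R)^-1 => x; lra.
Qed.

Lemma Hn2_le k : Hn2 R k.+1 <= 2 - (k.+1%:R)^-1.
Proof.
elim: k => [|k IH]; first by rewrite Hn2S' /Hn2 big_geq // add0r expr1n invr1; lra.
rewrite (Hn2S' R k.+1).
have a0 : (0 : R) < k.+1%:R by rewrite ltr0n.
have e : (k.+1%:R : R)^-1 - (k.+2%:R)^-1 - ((k.+2%:R) ^+ 2)^-1 = (k.+1%:R * k.+2%:R ^+ 2)^-1.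
  rewrite -[k.+2]addn1 natrD.
  move: a0; move: (k.+1%:R : R) => a a0.
  have h1 : a != 0 by rewrite gt_eqF.
  have h2 : a + 1%:R != 0 by rewrite gt_eqF //; lra.
  by field; rewrite h1 h2.
have : (0 : R) <= (k.+1%:R * k.+2%:R ^+ 2)^-1 by rewrite invr_ge0 mulr_ge0 // exprn_ge0.
rewrite -e; move: IH; move: (k.+1%:R : R)^-1 (k.+2%:R : R)^-1 ((k.+2%:R : R) ^+ 2)^-1 => x y z.
lra.
Qed.

Lemma gamma_cvg : (fun n => Hn R n - ln (n%:R : R)) @ \oo --> euler_gamma R.
Proof.
have dec : nonincreasing_seq (fun n => u R n.+1).
  by apply/nonincreasing_seqP => n; exact: u_dec.
have lb : has_lbound (range (fun n => u R n.+1)).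
  by exists 0 => _ [n _ <-]; exact: u_ge0.
have cv := nonincreasing_cvgn dec lb.
have cu : u R @ \oo --> inf (range (fun n => u R n.+1)) by rewrite -cvg_shiftS.
have eg : euler_gamma R = inf (range (fun n => u R n.+1)) by apply: cvg_lim.
by rewrite eg.
Qed.
End Anal2.

Theorem theorem2 (R : realType) :
  [/\ (forall n : nat, (0 < n)%N ->
         Expect (fun s : 'S_n => (S_walk s)%:R : R) = 2 * Hn R n - 2),
      (fun n : nat => Expect (fun s : 'S_n => (S_walk s)%:R : R)
          - (2 * ln (n%:R : R) + 2 * euler_gamma R - 2)) @ \oo --> (0 : R),
      (forall n : nat, (0 < n)%N ->
         Var (fun s : 'S_n => (S_walk s)%:R : R)
         = 2 * (Hn R n - Hn2 R n)
           + 2 * Cov (fun s : 'S_n => (L_min s)%:R : R) (fun s => (R_min s)%:R))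
    & exists C : R, forall n : nat, (0 < n)%N ->
         `| Var (fun s : 'S_n => (S_walk s)%:R : R) - 2 * ln (n%:R : R) | <= C].
Proof.
split.
- by case=> [//|k] _; exact: ES.
- have hg := gamma_cvg R.
  have h0 : (fun n => 2 * ((Hn R n - ln (n%:R : R)) - euler_gamma R)) @ \oo --> (2 * 0 : R).
    by apply: cvgMl_tmp; apply/subr_cvg0.
  rewrite mulr0 in h0.
  apply: (cvg_trans _ h0); apply: near_eq_cvg; exists 1%N => // n /= n1.
  case: n n1 => [//|k] _; rewrite ES; ring.
- by case=> [//|k] _; rewrite VarS CovLR; ring.
- exists 6 => -[//|k] _; rewrite VarS.
  have := u_ge0 R k; have := u_le1 R k; have := Hn2_ge1 R k; have := Hn2_le R k; rewrite /u.
  have : (0 : R) <= (k.+1%:R)^-1 by rewrite invr_ge0.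
  move: (k.+1%:R : R)^-1 (Hn R k.+1) (Hn2 R k.+1) (ln (k.+1%:R : R)) => x h h2 l.
  move=> *; rewrite ler_norml; apply/andP; split; lra.
Qed.
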